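(* Define $J_T(\pi)=g_T(\pi)$ and, for $k=T-1,\dots,0$, $$J_k(\pi)=\inf_{u\in\mathcal U}\Big\{g_k(\pi,u)+E_{Y_{k+1}}\big[J_{k+1}(\Pi(\pi,u,y_{k+1}))\,\big|\,\pi,u\big]\Big\},$$ where $Y_{k+1}$ has (mass or density) function $p(y\mid\pi,u)=\sum_{i,j}B^i(y,u)A^{ij}(u)\pi(j)$. Then for every $0\le k\le T$, $J_k$ is concave on $\Delta^N$.
   Context: Controlled HMM: states $\{e_1,\dots,e_N\}$, finite control set $\mathcal U$, transition probabilities $A^{ij}(u)=p(X_{k+1}=e_i\mid X_k=e_j,U_k=u)$, measurement space $\mathcal Y$ (finite, or with densities w.r.t. a reference measure), measurement kernels $B^i(y,u)=p(Y_{k}=y\mid X_{k}=e_i,U_{k-1}=u)$. $\Delta^N=\{x\in\mathbb R^N:\sum_i x(i)=1,\ 0\le x(i)\le1\}$. Filter map: $\Pi(\pi,u,y)(i)=\frac{B^i(y,u)\sum_jA^{ij}(u)\pi(j)}{\sum_\ell\sum_jB^\ell(y,u)A^{\ell j}(u)\pi(j)}$. Costs $c_T:\{e_i\}\to[0,\infty)$, $c_k:\{e_i\}\times\mathcal U\to[0,\infty)$. Define $\tilde g_T(\pi)=-\sum_i\pi(i)\log\pi(i)$, $\tilde g_k(\pi,u)=-\sum_{i,j=1}^N A^{ij}(u)\pi(j)\log\frac{A^{ij}(u)\pi(j)}{\sum_{\ell=1}^N A^{i\ell}(u)\pi(\ell)}$ (with $0\log0=0$), $g_k(\pi,u)=\tilde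 g_k(\pi,u)+\sum_i\pi(i)c_k(e_i,u)$, $g_T(\pi)=\tilde g_T(\pi)+\sum_i\pi(i)c_T(e_i)$. $J_k$ is the value function of the belief-state reformulation of the active smoothing problem (minimising smoother entropy plus expected costs). *)

(* Defs.v *)
From HB Require Import structures.
From mathcomp Require Import all_boot all_order all_algebra.
From mathcomp Require Import all_classical all_reals all_analysis.
Set Implicit Arguments. Unset Strict Implicit. Unset Printing Implicit Defensive.
Import Order.TTheory GRing.Theory Num.Theory.
Local Open Scope ring_scope.

(* States e_1..e_N are indexed by 'I_N; a belief pi is a function 'I_N -> R. *)

Definition simplex (R : realType) (N : nat) (x : 'I_N -> R) : Prop :=
  (forall i, 0 <= x i) /\ \sum_(i < N) x i = 1.

Definition xlnx (R : realType) (x : R) : R := if x == 0 then 0 else x * ln x.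
Definition alnq (R : realType) (a s : R) : R := if a == 0 then 0 else a * ln (a / s).

Section Model.
Context (R : realType) (d : measure_display) (Y : measurableType d)
  (N : nat) (U : finType)
  (A : 'I_N -> 'I_N -> U -> R)   (* A i j u = p(X_{k+1}=e_i | X_k=e_j, U_k=u) *)
  (B : 'I_N -> U -> Y -> R).     (* B i u y = p(Y_k = y | X_k = e_i, U_{k-1}=u) *)

Definition pY (pi : 'I_N -> R) (u : U) (y : Y) : R :=
  \sum_(i < N) \sum_(j < N) B i u y * A i j u * pi j.

Definition filterPi (pi : 'I_N -> R) (u : U) (y : Y) : 'I_N -> R :=
  fun i => B i u y * (\sum_(j < N) A i j u * pi j) / pY pi u y.

Definition gT_tilde (pi : 'I_N -> R) : R := - \sum_(i < N) xlnx (pi i).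

Definition gk_tilde (pi : 'I_N -> R) (u : U) : R :=
  - \sum_(i < N) \sum_(j < N)
      alnq (A i j u * pi j) (\sum_(l < N) A i l u * pi l).

Definition g_T (cT : 'I_N -> R) (pi : 'I_N -> R) : R :=
  gT_tilde pi + \sum_(i < N) pi i * cT i.

Definition g_k (c : nat -> 'I_N -> U -> R) (k : nat) (pi : 'I_N -> R) (u : U) : R :=
  gk_tilde pi u + \sum_(i < N) pi i * c k i u.

(* Backward recursion: Jaux m k is the value function at time k when m = T - k
   steps remain.  Jaux 0 _ = g_T; the infimum over the finite nonempty control
   set U (u0 witnesses nonemptiness) is a minimum.  The conditional expectation
   of J_{k+1}(Pi(pi,u,Y_{k+1})) is the integral against the density p(y|pi,u)
   w.r.t. the reference measure mu (counting measure for finite Y). *)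
Fixpoint Jaux (mu : {measure set Y -> \bar R}) (u0 : U)
    (cT : 'I_N -> R) (c : nat -> 'I_N -> U -> R) (m k : nat) {struct m}
    : ('I_N -> R) -> R :=
  match m with
  | 0 => g_T cT
  | m'.+1 => fun pi =>
      let Q := fun u : U =>
        g_k c k pi u
        + fine (\int[mu]_y ((Jaux mu u0 cT c m' k.+1 (filterPi pi u y))
                             * pY pi u y)%:E) in
      \big[Num.min/Q u0]_(u : U) Q u
  end.

Definition J (mu : {measure set Y -> \bar R}) (u0 : U) (cT : 'I_N -> R)
    (c : nat -> 'I_N -> U -> R) (T k : nat) : ('I_N -> R) -> R :=
  Jaux mu u0 cT c (T - k) k.

End Model.

Definition concave_on_simplex (R : realType) (N : nat) (f : ('I_N -> R) -> R) : Prop :=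
  forall (p1 p2 : 'I_N -> R) (t : R), simplex p1 -> simplex p2 -> 0 <= t <= 1 ->
    t * f p1 + (1 - t) * f p2 <= f (fun i => t * p1 i + (1 - t) * p2 i).

(* Main.v *)
Require Import Defs.
From HB Require Import structures.
From mathcomp Require Import all_boot all_order all_algebra.
From mathcomp Require Import all_classical all_reals all_analysis.
From mathcomp Require Import ring lra.
Import Order.TTheory GRing.Theory Num.Theory.
Local Open Scope ring_scope.
Set Implicit Arguments. Unset Strict Implicit. Unset Printing Implicit Defensive.
Lemma ln_le_sub1 (R : realType) (x : R) : 0 < x -> ln x <= x - 1.
Proof.
move=> x0; have := expR_ge1Dx (ln x); rewrite lnK ?posrE // => h.
by rewrite lerBrDl.
Qed.

Lemma alnq_lb (R : realType) (C S c s : R) : 0 < C -> 0 < S -> 0 <= c -> c <= s ->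
  c * ln (C / S) + c - s * (C / S) <= alnq c s.
Proof.
move=> C0 S0 c0 cs; rewrite /alnq; have [ce|cn0] := eqVneq c 0.
  subst c; rewrite mul0r add0r subr_le0; apply: mulr_ge0; last by rewrite divr_ge0 // ltW.
  by [].
have cp : 0 < c by rewrite lt0r cn0.
have sp : 0 < s by apply: lt_le_trans cs.
have CS : 0 < C / S by rewrite divr_gt0.
have cs' : 0 < c / s by rewrite divr_gt0.
set y := (C / S) / (c / s).
have y0 : 0 < y by rewrite divr_gt0.
have := ln_le_sub1 y0; rewrite /y ln_div ?posrE // => h.
have e : s * (C / S) = c * ((C / S) / (c / s)).
  by field; rewrite !gt_eqF.
rewrite e; have := ler_wpM2l (ltW cp) h; lra.
Qed.

Lemma alnq_subadd (R : realType) (x y u v : R) : 0 <= x -> x <= u -> 0 <= y -> y <= v ->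
  alnq (x + y) (u + v) <= alnq x u + alnq y v.
Proof.
move=> x0 xu y0 yv; have [e|ne] := eqVneq (x + y) 0.
  have x0' : x = 0 by lra.
  have y0' : y = 0 by lra.
  by rewrite e x0' y0' /alnq eqxx addr0.
have C0 : 0 < x + y by rewrite lt0r ne addr_ge0.
have S0 : 0 < u + v by lra.
have h1 := alnq_lb C0 S0 x0 xu.
have h2 := alnq_lb C0 S0 y0 yv.
rewrite {1}/alnq (negbTE ne).
have e : (x + y) * ln ((x + y) / (u + v)) =
  (x * ln ((x + y) / (u + v)) + x - u * ((x + y) / (u + v))) +
  (y * ln ((x + y) / (u + v)) + y - v * ((x + y) / (u + v))).
  by field; rewrite gt_eqF.
rewrite e; exact: lerD.
Qed.

Lemma alnq_hom (R : realType) (t c s : R) : 0 <= t -> alnq (t * c) (t * s) = t * alnq c s.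
Proof.
move=> t0; rewrite /alnq; have [->|tn0] := eqVneq t 0; first by rewrite !mul0r eqxx.
rewrite mulf_eq0 (negbTE tn0) /=; case: eqP => [_|_]; first by rewrite mulr0.
rewrite -mulrA; congr (_ * (_ * ln _)).
by rewrite invfM mulrACA mulfV // mul1r.
Qed.

Lemma alnq_ge (R : realType) (a s : R) : 0 <= a -> a <= s -> a - s <= alnq a s.
Proof.
move=> a0 as_; have := @alnq_lb R 1 1 a s ltr01 ltr01 a0 as_.
by rewrite divr1 ln1 mulr0 add0r mulr1.
Qed.

Lemma alnq_le0 (R : realType) (a s : R) : 0 <= a -> a <= s -> alnq a s <= 0.
Proof.
move=> a0 as_; rewrite /alnq; case: eqP => // /eqP an0.
have ap : 0 < a by rewrite lt0r an0.
have sp : 0 < s by apply: lt_le_trans as_.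
rewrite pmulr_rle0 // ln_le0 // ler_pdivrMr // mul1r //.
Qed.
Section IntLemmas.
Local Open Scope classical_set_scope.
Local Open Scope ereal_scope.
Import HBNNSimple.

Lemma int_mono d (Y : measurableType d) (R : realType) (mu : {measure set Y -> \bar R})
  (f g : Y -> \bar R) : (forall y, 0 <= f y) -> (forall y, f y <= g y) ->
  \int[mu]_y f y <= \int[mu]_y g y.
Proof.
move=> f0 fg; have g0 y : 0 <= g y by apply: le_trans (f0 y) (fg y).
rewrite (ge0_integralTE mu f0) (ge0_integralTE mu g0) /=.
apply: ge_ereal_sup => _ [h hf <-]; apply: ereal_sup_ubound; exists h => //= y.
exact: le_trans (hf y) (fg y).
Qed.

Lemma sup_add_le (R : realType) (X Z : set (\bar R)) z :
  (exists x, X x) -> (exists y, Z y) -> (forall x, X x -> 0 <= x) ->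
  (forall y, Z y -> 0 <= y) ->
  (forall x y, X x -> Z y -> x + y <= z) -> ereal_sup X + ereal_sup Z <= z.
Proof.
move=> [x0 Xx0] [y0 Yy0] X0 Y0 H.
have z0 : 0 <= z by apply: le_trans (H _ _ Xx0 Yy0); apply: adde_ge0; [exact: X0|exact: Y0].
case: z z0 H => [r| |] z0 H; last by [].
- have sX y : Z y -> ereal_sup X + y <= r%:E.
    move=> Yy; rewrite -lee_suber_addr //; apply: ge_ereal_sup => x Xx.
    by rewrite lee_suber_addr //; exact: H.
  rewrite addeC -lee_suber_addr //; apply: ge_ereal_sup => y Yy.
  by rewrite lee_suber_addr // addeC; exact: sX.
- exact: leey.
Qed.

Lemma int_supadd d (Y : measurableType d) (R : realType) (mu : {measure set Y -> \bar R})
  (f g : Y -> \bar R) (a b : R) : (0 <= a)%R -> (0 <= b)%R ->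
  (forall y, 0 <= f y) -> (forall y, 0 <= g y) ->
  a%:E * \int[mu]_y f y + b%:E * \int[mu]_y g y <= \int[mu]_y (a%:E * f y + b%:E * g y).
Proof.
move=> a0 b0 f0 g0.
rewrite (ge0_integralTE mu f0) (ge0_integralTE mu g0) /=.
have ne (h : Y -> \bar R) : (forall y, 0 <= h y) ->
    [set sintegral mu h0 | h0 in [set h0 : {nnsfun Y >-> R} | forall x, (h0 x)%:E <= h x]]
    != set0.
  move=> hp; apply/set0P; exists (sintegral mu (@nnsfun0 _ Y R)); exists nnsfun0 => //.
rewrite -!ereal_supZl ?ne //.
apply: sup_add_le.
- by exists (a%:E * sintegral mu (@nnsfun0 _ Y R)); exists (sintegral mu (@nnsfun0 _ Y R)) => //;
    exists nnsfun0.
- by exists (b%:E * sintegral mu (@nnsfun0 _ Y R)); exists (sintegral mu (@nnsfun0 _ Y R)) => //;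
    exists nnsfun0.
- by move=> _ [_ [h _ <-] <-]; rewrite mule_ge0 // sintegral_ge0.
- by move=> _ [_ [h _ <-] <-]; rewrite mule_ge0 // sintegral_ge0.
move=> _ _ [_ [h1 h1f <-] <-] [_ [h2 h2g <-] <-].
rewrite -(patch_setT (fun _ => 0%R) h1) -(patch_setT (fun _ => 0%R) h2).
rewrite -!integral_nnsfun // -!ge0_integralZl_EFin //;
  try (by move=> x _; rewrite lee_fin);
  try (by apply/measurable_realfun.measurable_EFinP; exact: measurable_funPT).
rewrite -ge0_integralD //.
- apply: int_mono => y; first by rewrite adde_ge0 // mule_ge0 // lee_fin.
  by apply: leeD; apply: lee_wpmul2l; rewrite ?lee_fin.
- by move=> y _; rewrite mule_ge0 // lee_fin.
- by apply: measurable_funeM; apply/measurable_realfun.measurable_EFinP; exact: measurable_funPT.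
- by move=> y _; rewrite mule_ge0 // lee_fin.
- by apply: measurable_funeM; apply/measurable_realfun.measurable_EFinP; exact: measurable_funPT.
Qed.
End IntLemmas.
Lemma simplex_le1 (R : realType) N (p : 'I_N -> R) : simplex p -> forall i, p i <= 1.
Proof.
move=> [p0 ps] i; rewrite -ps (bigD1 i) //= lerDl; exact: sumr_ge0.
Qed.

Lemma simplex_comb (R : realType) N (p1 p2 : 'I_N -> R) t : simplex p1 -> simplex p2 ->
  0 <= t <= 1 -> simplex (fun i => t * p1 i + (1 - t) * p2 i).
Proof.
move=> [p10 s1] [p20 s2] /andP[t0 t1]; split.
  by move=> i; rewrite addr_ge0 // mulr_ge0 // subr_ge0.
by rewrite big_split /= -!mulr_sumr s1 s2 !mulr1 addrC subrK.
Qed.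

Lemma persp (R : realType) N (Jf : ('I_N -> R) -> R) (n1 n2 : 'I_N -> R) (t : R) :
  concave_on_simplex Jf -> (forall i, 0 <= n1 i) -> (forall i, 0 <= n2 i) -> 0 <= t <= 1 ->
  t * (Jf (fun i => n1 i / \sum_(j < N) n1 j) * \sum_(j < N) n1 j)
  + (1 - t) * (Jf (fun i => n2 i / \sum_(j < N) n2 j) * \sum_(j < N) n2 j) <=
  Jf (fun i => (t * n1 i + (1 - t) * n2 i) /
     (t * \sum_(j < N) n1 j + (1 - t) * \sum_(j < N) n2 j))
   * (t * \sum_(j < N) n1 j + (1 - t) * \sum_(j < N) n2 j).
Proof.
move=> cJ n10 n20 /andP[t0 t1].
set P1 := \sum_(j < N) n1 j; set P2 := \sum_(j < N) n2 j.
have P10 : 0 <= P1 by exact: sumr_ge0.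
have P20 : 0 <= P2 by exact: sumr_ge0.
have simp1 : 0 < P1 -> simplex (fun i => n1 i / P1).
  move=> P1p; split; first by move=> i; rewrite divr_ge0 // ltW.
  by rewrite -mulr_suml mulfV // lt0r_neq0.
have simp2 : 0 < P2 -> simplex (fun i => n2 i / P2).
  move=> P2p; split; first by move=> i; rewrite divr_ge0 // ltW.
  by rewrite -mulr_suml mulfV // lt0r_neq0.
set J1 := Jf (fun i => n1 i / P1); set J2 := Jf (fun i => n2 i / P2).
have e1 : t * (J1 * P1) = J1 * (t * P1) by ring.
have e2 : (1 - t) * (J2 * P2) = J2 * ((1 - t) * P2) by ring.
rewrite e1 e2.
set a := t * P1; set b := (1 - t) * P2.
have a0 : 0 <= a by rewrite mulr_ge0.
have b0 : 0 <= b by rewrite mulr_ge0 // subr_ge0.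
have [ha|ha] := eqVneq a 0; have [hb|hb] := eqVneq b 0.
- by rewrite ha hb !addr0 !mulr0 addr0.
- have tn1 i : t * n1 i = 0.
    move: ha; rewrite /a => /eqP; rewrite mulf_eq0 => /orP[/eqP->|/eqP P0].
      by rewrite mul0r.
    by rewrite (psumr_eq0P (fun j _ => n10 j) P0) // mulr0.
  have t1n : 1 - t != 0 by move: hb; rewrite /b mulf_eq0 negb_or => /andP[].
  have P2n : P2 != 0 by move: hb; rewrite /b mulf_eq0 negb_or => /andP[].
  have -> : (fun i => (t * n1 i + (1 - t) * n2 i) / (a + b)) = (fun i => n2 i / P2).
    apply: funext => i; rewrite tn1 ha /b !add0r invfM mulrACA mulfV // mul1r //.
  by rewrite ha mulr0 !add0r.
- have tn2 i : (1 - t) * n2 i = 0.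
    move: hb; rewrite /b => /eqP; rewrite mulf_eq0 => /orP[/eqP->|/eqP P0].
      by rewrite mul0r.
    by rewrite (psumr_eq0P (fun j _ => n20 j) P0) // mulr0.
  have tn : t != 0 by move: ha; rewrite /a mulf_eq0 negb_or => /andP[].
  have P1n : P1 != 0 by move: ha; rewrite /a mulf_eq0 negb_or => /andP[].
  have -> : (fun i => (t * n1 i + (1 - t) * n2 i) / (a + b)) = (fun i => n1 i / P1).
    apply: funext => i; rewrite tn2 hb /a !addr0 invfM mulrACA mulfV // mul1r //.
  by rewrite hb mulr0 !addr0.
- have tn : t != 0 by move: ha; rewrite /a mulf_eq0 negb_or => /andP[].
  have P1n : P1 != 0 by move: ha; rewrite /a mulf_eq0 negb_or => /andP[].
  have t1n : 1 - t != 0 by move: hb; rewrite /b mulf_eq0 negb_or => /andP[].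
  have P2n : P2 != 0 by move: hb; rewrite /b mulf_eq0 negb_or => /andP[].
  have P1p : 0 < P1 by rewrite lt0r P1n.
  have P2p : 0 < P2 by rewrite lt0r P2n.
  have ap : 0 < a by rewrite lt0r ha.
  have bp : 0 < b by rewrite lt0r hb.
  have abn : a + b != 0 by rewrite gt_eqF // addr_gt0.
  set l := a / (a + b).
  have l0 : 0 <= l by rewrite divr_ge0 // addr_ge0.
  have l1 : l <= 1 by rewrite ler_pdivrMr ?addr_gt0 // mul1r lerDl.
  have el : 1 - l = b / (a + b) by rewrite /l; field.
  have -> : (fun i => (t * n1 i + (1 - t) * n2 i) / (a + b)) =
      (fun i => l * (n1 i / P1) + (1 - l) * (n2 i / P2)).
    apply: funext => i; rewrite el /l /a /b; field.
    by rewrite P1n P2n -/a -/b abn.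
  have := cJ _ _ l (simp1 P1p) (simp2 P2p) (introT andP (conj l0 l1)).
  rewrite -/J1 -/J2 => h.
  have := ler_wpM2r (ltW (addr_gt0 ap bp)) h.
  have -> : (l * J1 + (1 - l) * J2) * (a + b) = J1 * a + J2 * b.
    by rewrite el /l; field.
  by [].
Qed.
Lemma alnq_conc (R : realType) (x y u v t : R) : 0 <= x -> x <= u -> 0 <= y -> y <= v ->
  0 <= t <= 1 ->
  alnq (t * x + (1 - t) * y) (t * u + (1 - t) * v) <= t * alnq x u + (1 - t) * alnq y v.
Proof.
move=> x0 xu y0 yv /andP[t0 t1].
have t1' : 0 <= 1 - t by rewrite subr_ge0.
rewrite -!alnq_hom //; apply: alnq_subadd.
- exact: mulr_ge0.
- exact: ler_wpM2l.
- exact: mulr_ge0.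
- exact: ler_wpM2l.
Qed.

Lemma xlnx_alnq (R : realType) (x : R) : xlnx x = alnq x 1.
Proof. by rewrite /xlnx /alnq divr1. Qed.

Lemma xlnx_conc (R : realType) (x y t : R) : 0 <= x -> x <= 1 -> 0 <= y -> y <= 1 ->
  0 <= t <= 1 -> xlnx (t * x + (1 - t) * y) <= t * xlnx x + (1 - t) * xlnx y.
Proof.
move=> x0 x1 y0 y1 tt; rewrite !xlnx_alnq.
have {2}-> : (1 : R) = t * 1 + (1 - t) * 1 by ring.
exact: alnq_conc.
Qed.

Lemma simplex_norm (R : realType) N (n : 'I_N -> R) : (forall i, 0 <= n i) ->
  0 < \sum_(j < N) n j -> simplex (fun i => n i / \sum_(j < N) n j).
Proof.
move=> n0 P1p; split; first by move=> i; rewrite divr_ge0 // ltW.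
by rewrite -mulr_suml mulfV // lt0r_neq0.
Qed.

Lemma sum_le_one (R : realType) N (w p : 'I_N -> R) : (forall j, 0 <= w j <= 1) ->
  simplex p -> \sum_(j < N) w j * p j <= 1.
Proof.
move=> w01 [p0 ps]; rewrite -ps; apply: ler_sum => j _.
by case/andP: (w01 j) => w0 w1; rewrite ler_piMl.
Qed.

Lemma lin_sum (R : realType) N (w p1 p2 : 'I_N -> R) t :
  \sum_(j < N) w j * (t * p1 j + (1 - t) * p2 j) =
  t * \sum_(j < N) w j * p1 j + (1 - t) * \sum_(j < N) w j * p2 j.
Proof.
rewrite !mulr_sumr -big_split /=; apply: eq_bigr => j _; ring.
Qed.
Definition nmr (R : realType) d (Y : measurableType d) N (U : finType)
  (A : 'I_N -> 'I_N -> U -> R) (B : 'I_N -> U -> Y -> R) (p : 'I_N -> R) (u : U) (y : Y)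
  (i : 'I_N) : R := B i u y * \sum_(j < N) A i j u * p j.

Lemma pY_nm (R : realType) d (Y : measurableType d) N (U : finType)
  (A : 'I_N -> 'I_N -> U -> R) (B : 'I_N -> U -> Y -> R) p u y :
  pY A B p u y = \sum_(i < N) nmr A B p u y i.
Proof.
rewrite /pY; apply: eq_bigr => i _; rewrite /nmr mulr_sumr.
by apply: eq_bigr => j _; rewrite mulrA.
Qed.

Lemma filterPi_nm (R : realType) d (Y : measurableType d) N (U : finType)
  (A : 'I_N -> 'I_N -> U -> R) (B : 'I_N -> U -> Y -> R) p u y :
  filterPi A B p u y = fun i => nmr A B p u y i / \sum_(j < N) nmr A B p u y j.
Proof. by apply: funext => i; rewrite /filterPi pY_nm. Qed.

Lemma A_le1 (R : realType) N (U : finType) (A : 'I_N -> 'I_N -> U -> R) :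
  (forall i j u, 0 <= A i j u) -> (forall j u, \sum_(i < N) A i j u = 1) ->
  forall i j u, A i j u <= 1.
Proof.
move=> hA0 hA1 i j u; rewrite -(hA1 j u) (bigD1 i) //= lerDl.
by apply: sumr_ge0 => k _.
Qed.

Lemma F_bounds (R : realType) d (Y : measurableType d) N (U : finType)
  (A : 'I_N -> 'I_N -> U -> R) (B : 'I_N -> U -> Y -> R) (Jm : ('I_N -> R) -> R) M' :
  (forall i j u, 0 <= A i j u) -> (forall j u, \sum_(i < N) A i j u = 1) ->
  (forall i u y, 0 <= B i u y) -> 0 <= M' ->
  (forall p, simplex p -> 0 <= Jm p <= M') ->
  forall p u y, simplex p ->
  0 <= Jm (filterPi A B p u y) * pY A B p u y <= M' * \sum_(i < N) B i u y.
Proof.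
move=> hA0 hA1 hB0 M0 bJ p u y sp.
have nm0 i : 0 <= nmr A B p u y i.
  rewrite /nmr mulr_ge0 //; apply: sumr_ge0 => j _; rewrite mulr_ge0 //.
  by case: sp => p0 _; exact: p0.
have nmle : \sum_(i < N) nmr A B p u y i <= \sum_(i < N) B i u y.
  apply: ler_sum => i _; rewrite /nmr ler_piMr //.
  apply: sum_le_one => // j; rewrite hA0 /=; exact: A_le1.
rewrite filterPi_nm pY_nm.
set P := \sum_(i < N) nmr A B p u y i.
have P0 : 0 <= P by exact: sumr_ge0.
have [->|Pn] := eqVneq P 0.
  by rewrite mulr0 lexx /= mulr_ge0 //; apply: sumr_ge0.
have Pp : 0 < P by rewrite lt0r Pn.
have /andP[j0 j1] := bJ _ (simplex_norm nm0 Pp).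
rewrite mulr_ge0 //=; apply: le_trans (ler_wpM2r P0 j1) _.
exact: ler_wpM2l.
Qed.

Lemma F_conc (R : realType) d (Y : measurableType d) N (U : finType)
  (A : 'I_N -> 'I_N -> U -> R) (B : 'I_N -> U -> Y -> R) (Jm : ('I_N -> R) -> R) :
  (forall i j u, 0 <= A i j u) -> (forall i u y, 0 <= B i u y) ->
  concave_on_simplex Jm ->
  forall p1 p2 t u y, simplex p1 -> simplex p2 -> 0 <= t <= 1 ->
  t * (Jm (filterPi A B p1 u y) * pY A B p1 u y) +
  (1 - t) * (Jm (filterPi A B p2 u y) * pY A B p2 u y) <=
  Jm (filterPi A B (fun i => t * p1 i + (1 - t) * p2 i) u y) *
     pY A B (fun i => t * p1 i + (1 - t) * p2 i) u y.
Proof.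
move=> hA0 hB0 cJ p1 p2 t u y [p10 _] [p20 _] tt.
have nm0 p : (forall j, 0 <= p j) -> forall i, 0 <= nmr A B p u y i.
  move=> p0 i; rewrite /nmr mulr_ge0 //; apply: sumr_ge0 => j _.
  by rewrite mulr_ge0.
rewrite !filterPi_nm !pY_nm.
have -> : nmr A B (fun i => t * p1 i + (1 - t) * p2 i) u y =
    (fun i => t * nmr A B p1 u y i + (1 - t) * nmr A B p2 u y i).
  by apply: funext => i; rewrite /nmr lin_sum; ring.
rewrite big_split /= -!mulr_sumr.
by apply: persp => //; apply: nm0.
Qed.
Lemma intB_eq (R : realType) d (Y : measurableType d) (mu : {measure set Y -> \bar R}) N
  (U : finType) (B : 'I_N -> U -> Y -> R) (M : R) (u : U) :
  (forall i u y, 0 <= B i u y) -> (forall i u, measurable_fun setT (B i u)) ->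
  (forall i u, (\int[mu]_y (B i u y)%:E = 1)%E) -> 0 <= M ->
  (\int[mu]_y (M * \sum_(i < N) B i u y)%:E = (M * N%:R)%:E)%E.
Proof.
move=> hB0 hBm hB1 M0.
transitivity (\int[mu]_y (M%:E * \sum_(i < N) (B i u y)%:E))%E.
  by apply: eq_integral => y _; rewrite EFinM sumEFin.
rewrite ge0_integralZl_EFin //; first last.
- apply: emeasurable_sum => i.
  by apply/measurable_realfun.measurable_EFinP; exact: hBm.
- by move=> y _; rewrite sumEFin lee_fin; apply: sumr_ge0 => i _.
rewrite ge0_integral_sum //; first last.
- by move=> i y _; rewrite lee_fin.
- by move=> i; apply/measurable_realfun.measurable_EFinP; exact: hBm.
rewrite (eq_bigr (fun _ => 1%:E)); last by move=> i _; exact: hB1.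
by rewrite sumEFin sumr_const card_ord -EFinM.
Qed.

Lemma intterm (R : realType) d (Y : measurableType d) (mu : {measure set Y -> \bar R}) N
  (U : finType) (A : 'I_N -> 'I_N -> U -> R) (B : 'I_N -> U -> Y -> R)
  (Jm : ('I_N -> R) -> R) (M' : R) (u : U) :
  (forall i j u, 0 <= A i j u) -> (forall j u, \sum_(i < N) A i j u = 1) ->
  (forall i u y, 0 <= B i u y) -> (forall i u, measurable_fun setT (B i u)) ->
  (forall i u, (\int[mu]_y (B i u y)%:E = 1)%E) -> 0 <= M' ->
  concave_on_simplex Jm -> (forall p, simplex p -> 0 <= Jm p <= M') ->
  (forall p, simplex p ->
     0 <= fine (\int[mu]_y (Jm (filterPi A B p u y) * pY A B p u y)%:E) <= M' * N%:R) /\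
  concave_on_simplex
    (fun p => fine (\int[mu]_y (Jm (filterPi A B p u y) * pY A B p u y)%:E)).
Proof.
move=> hA0 hA1 hB0 hBm hB1 M0 cJ bJ.
have Fb := F_bounds hA0 hA1 hB0 M0 bJ.
have intB := @intB_eq _ _ _ mu _ _ B M' u hB0 hBm hB1 M0.
have Ib p : simplex p ->
  (0 <= \int[mu]_y (Jm (filterPi A B p u y) * pY A B p u y)%:E <= (M' * N%:R)%:E)%E.
  move=> sp; apply/andP; split.
    by apply: integral_ge0 => y _; rewrite lee_fin; case/andP: (Fb p u y sp).
  rewrite -intB; apply: int_mono => y; rewrite lee_fin; case/andP: (Fb p u y sp) => //.
have If p : simplex p ->
  (\int[mu]_y (Jm (filterPi A B p u y) * pY A B p u y)%:E)%E \is a fin_num.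
  move=> sp; have /andP[i0 i1] := Ib p sp.
  by rewrite ge0_fin_numE // (le_lt_trans i1) // ltry.
split.
  move=> p sp; have /andP[i0 i1] := Ib p sp.
  by rewrite -lee_fin fineK ?If // -lee_fin fineK ?If // i0.
move=> p1 p2 t s1 s2 tt.
have st := simplex_comb s1 s2 tt.
case/andP: (tt) => t0 t1.
rewrite -lee_fin EFinD !EFinM !fineK ?If //.
apply: le_trans (int_supadd mu _ _ _ _) _.
- exact: t0.
- by rewrite subr_ge0.
- by move=> y; rewrite lee_fin; case/andP: (Fb p1 u y s1).
- by move=> y; rewrite lee_fin; case/andP: (Fb p2 u y s2).
apply: int_mono.
  move=> y; rewrite -!EFinM -EFinD lee_fin addr_ge0 // mulr_ge0 //.
  + by case/andP: (Fb p1 u y s1).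
  + by rewrite subr_ge0.
  + by case/andP: (Fb p2 u y s2).
move=> y; rewrite -!EFinM -EFinD lee_fin.
exact: F_conc.
Qed.
Lemma term_le_sum (R : realType) N (w p : 'I_N -> R) j : (forall l, 0 <= w l) ->
  (forall l, 0 <= p l) -> w j * p j <= \sum_(l < N) w l * p l.
Proof.
move=> w0 p0; rewrite (bigD1 j) //= lerDl; apply: sumr_ge0 => l _.
exact: mulr_ge0.
Qed.

Lemma gT_props (R : realType) N (cT : 'I_N -> R) : (forall i, 0 <= cT i) ->
  concave_on_simplex (g_T cT) /\
  exists M, 0 <= M /\ forall p, simplex p -> 0 <= g_T cT p <= M.
Proof.
move=> cT0; split.
  move=> p1 p2 t s1 s2 tt; rewrite /g_T /gT_tilde.
  have h1 : \sum_(i < N) xlnx (t * p1 i + (1 - t) * p2 i) <=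
      t * \sum_(i < N) xlnx (p1 i) + (1 - t) * \sum_(i < N) xlnx (p2 i).
    rewrite !mulr_sumr -big_split /=; apply: ler_sum => i _.
    case: (s1) => p10 _; case: (s2) => p20 _.
    by apply: xlnx_conc => //; exact: simplex_le1.
  have h2 : \sum_(i < N) (t * p1 i + (1 - t) * p2 i) * cT i =
      t * \sum_(i < N) p1 i * cT i + (1 - t) * \sum_(i < N) p2 i * cT i.
    rewrite !mulr_sumr -big_split /=; apply: eq_bigr => i _; ring.
  rewrite h2; lra.
exists (\sum_(i < N) (1 : R) + \sum_(i < N) cT i); split.
  by rewrite addr_ge0 //; apply: sumr_ge0.
move=> p sp; case: (sp) => p0 _; rewrite /g_T /gT_tilde; apply/andP; split.
  rewrite addr_ge0 //; last by apply: sumr_ge0 => i _; rewrite mulr_ge0.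
  rewrite oppr_ge0; apply: sumr_le0 => i _; rewrite xlnx_alnq alnq_le0 //.
  exact: simplex_le1.
apply: lerD.
  rewrite -sumrN; apply: ler_sum => i _; rewrite xlnx_alnq.
  have := alnq_ge (p0 i) (simplex_le1 sp i); have := p0 i; lra.
apply: ler_sum => i _; rewrite ler_piMl //; exact: simplex_le1.
Qed.

Lemma gk_props (R : realType) N (U : finType) (A : 'I_N -> 'I_N -> U -> R)
  (c : nat -> 'I_N -> U -> R) k u :
  (forall i j u, 0 <= A i j u) -> (forall j u, \sum_(i < N) A i j u = 1) ->
  (forall k i u, 0 <= c k i u) ->
  concave_on_simplex (fun p => g_k A c k p u) /\
  (forall p, simplex p -> 0 <= g_k A c k p u <=
     \sum_(i < N) \sum_(j < N) (1 : R) + \sum_(i < N) c k i u).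
Proof.
move=> hA0 hA1 c0; split.
  move=> p1 p2 t s1 s2 tt; rewrite /g_k /gk_tilde.
  case: (s1) => p10 _; case: (s2) => p20 _.
  have h1 : \sum_(i < N) \sum_(j < N) alnq (A i j u * (t * p1 j + (1 - t) * p2 j))
      (\sum_(l < N) A i l u * (t * p1 l + (1 - t) * p2 l)) <=
    t * \sum_(i < N) \sum_(j < N) alnq (A i j u * p1 j) (\sum_(l < N) A i l u * p1 l) +
    (1 - t) * \sum_(i < N) \sum_(j < N) alnq (A i j u * p2 j) (\sum_(l < N) A i l u * p2 l).
    rewrite !mulr_sumr -big_split /=; apply: ler_sum => i _.
    rewrite !mulr_sumr -big_split /=; apply: ler_sum => j _.
    rewrite lin_sum.
    have -> : A i j u * (t * p1 j + (1 - t) * p2 j) =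
      t * (A i j u * p1 j) + (1 - t) * (A i j u * p2 j) by ring.
    apply: alnq_conc => //.
    - by rewrite mulr_ge0.
    - by apply: term_le_sum.
    - by rewrite mulr_ge0.
    - by apply: term_le_sum.
  have h2 : \sum_(i < N) (t * p1 i + (1 - t) * p2 i) * c k i u =
      t * \sum_(i < N) p1 i * c k i u + (1 - t) * \sum_(i < N) p2 i * c k i u.
    rewrite !mulr_sumr -big_split /=; apply: eq_bigr => i _; ring.
  rewrite h2; lra.
move=> p sp; case: (sp) => p0 _; rewrite /g_k /gk_tilde; apply/andP; split.
  rewrite addr_ge0 //; last by apply: sumr_ge0 => i _; rewrite mulr_ge0.
  rewrite oppr_ge0; apply: sumr_le0 => i _; apply: sumr_le0 => j _.
  by apply: alnq_le0; [rewrite mulr_ge0|apply: term_le_sum].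
apply: lerD.
  rewrite -sumrN; apply: ler_sum => i _; rewrite -sumrN; apply: ler_sum => j _.
  have a0 : 0 <= A i j u * p j by rewrite mulr_ge0.
  have as_ : A i j u * p j <= \sum_(l < N) A i l u * p l by apply: term_le_sum.
  have s1 : \sum_(l < N) A i l u * p l <= 1.
    apply: sum_le_one => // l; rewrite hA0 /=; exact: A_le1.
  have := alnq_ge a0 as_; lra.
apply: ler_sum => i _; rewrite ler_piMl //; exact: simplex_le1.
Qed.
Lemma main_ind (R : realType) (d : measure_display) (Y : measurableType d)
  (mu : {measure set Y -> \bar R}) (N : nat) (U : finType) (u0 : U)
  (A : 'I_N -> 'I_N -> U -> R) (B : 'I_N -> U -> Y -> R)
  (cT : 'I_N -> R) (c : nat -> 'I_N -> U -> R) :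
  (forall i j u, 0 <= A i j u) ->
  (forall j u, \sum_(i < N) A i j u = 1) ->
  (forall i u y, 0 <= B i u y) ->
  (forall i u, measurable_fun setT (B i u)) ->
  (forall i u, (\int[mu]_y (B i u y)%:E = 1)%E) ->
  (forall i, 0 <= cT i) ->
  (forall k i u, 0 <= c k i u) ->
  forall m k, concave_on_simplex (Jaux A B mu u0 cT c m k) /\
    exists M, 0 <= M /\ forall p, simplex p -> 0 <= Jaux A B mu u0 cT c m k p <= M.
Proof.
move=> hA0 hA1 hB0 hBm hB1 cT0 c0 m; elim: m => [|m IH] k.
  exact: gT_props.
have [cJ [M' [M0 bJ]]] := IH k.+1.
have IT u := @intterm _ _ _ mu _ _ A B _ M' u hA0 hA1 hB0 hBm hB1 M0 cJ bJ.
have GK u := @gk_props _ _ _ A c k u hA0 hA1 c0.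
set Q := fun p u => g_k A c k p u +
   fine (\int[mu]_y (Jaux A B mu u0 cT c m k.+1 (filterPi A B p u y) * pY A B p u y)%:E).
have -> : Jaux A B mu u0 cT c m.+1 k = fun p => \big[Num.min/Q p u0]_(u : U) Q p u by [].
have Qb u p : simplex p -> 0 <= Q p u <=
    \sum_(i < N) \sum_(j < N) (1 : R) + \sum_(i < N) c k i u + M' * N%:R.
  move=> sp; have /andP[g0 g1] := (GK u).2 p sp; have /andP[i0 i1] := (IT u).1 p sp.
  by rewrite /Q addr_ge0 //= lerD.
split.
  move=> p1 p2 t s1 s2 tt.
  have st := simplex_comb s1 s2 tt.
  case/andP: (tt) => t0 t1.
  have Qc u : t * Q p1 u + (1 - t) * Q p2 u <=
      Q (fun i => t * p1 i + (1 - t) * p2 i) u.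
    have h1 := (GK u).1 p1 p2 t s1 s2 tt.
    have h2 := (IT u).2 p1 p2 t s1 s2 tt.
    rewrite /Q /=; lra.
  have Lb u : t * \big[Num.min/Q p1 u0]_(u : U) Q p1 u +
      (1 - t) * \big[Num.min/Q p2 u0]_(u : U) Q p2 u <=
      Q (fun i => t * p1 i + (1 - t) * p2 i) u.
    apply: le_trans (Qc u); apply: lerD; apply: ler_wpM2l => //.
    - exact: bigmin_le.
    - by rewrite subr_ge0.
    - exact: bigmin_le.
  by apply: le_bigmin => // u _.
exists (\sum_(i < N) \sum_(j < N) (1 : R) + \sum_(i < N) c k i u0 + M' * N%:R).
split.
  have h1 : 0 <= \sum_(i < N) \sum_(j < N) (1 : R).
    by apply: sumr_ge0 => i _; apply: sumr_ge0.
  have h2 : 0 <= \sum_(i < N) c k i u0 by apply: sumr_ge0.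
  by rewrite !addr_ge0 ?mulr_ge0.
move=> p sp; apply/andP; split.
  apply: le_bigmin; first by case/andP: (Qb u0 p sp).
  by move=> u _; case/andP: (Qb u p sp).
apply: le_trans (bigmin_le _ u0 _) _.
by case/andP: (Qb u0 p sp).
Qed.

Theorem theorem2 (R : realType) (d : measure_display) (Y : measurableType d)
  (mu : {measure set Y -> \bar R}) (N : nat) (U : finType) (u0 : U)
  (A : 'I_N -> 'I_N -> U -> R) (B : 'I_N -> U -> Y -> R)
  (cT : 'I_N -> R) (c : nat -> 'I_N -> U -> R) (T : nat) :
  (forall i j u, 0 <= A i j u) ->
  (forall j u, \sum_(i < N) A i j u = 1) ->
  (forall i u y, 0 <= B i u y) ->
  (forall i u, measurable_fun setT (B i u)) ->
  (forall i u, (\int[mu]_y (B i u y)%:E = 1)%E) ->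
  (forall i, 0 <= cT i) ->
  (forall k i u, 0 <= c k i u) ->
  forall k : nat, (k <= T)%N -> concave_on_simplex (J A B mu u0 cT c T k).
Proof.
move=> hA0 hA1 hB0 hBm hB1 cT0 c0 k _.
exact: (@main_ind _ _ _ mu _ _ u0 A B cT c hA0 hA1 hB0 hBm hB1 cT0 c0 (T - k) k).1.
Qed.
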